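(* Let $k\ge 2$ be an integer, $\varepsilon=\exp(2\pi i/k)$, and let $P$ be the complex activation function of order $k$ described in the context. Let $T\subset\mathbb{BC}^n$ be bounded, i.e. $T=T_1\mathbf e_1+T_2\mathbf e_2$ with $T_1,T_2\subset\mathbb C^n$ bounded. Let $f:T\to\mathbb{BC}$ be a $\mathbb{BC}$-threshold function having $(\mathsf w_0,0,\dots,0)\in\mathbb{BC}^{n+1}$ as a weighting vector. Then there exist $\mathsf w_0'\in\mathbb{BC}$ and $\delta>0$ such that $(\mathsf w_0',\mathsf w_1,\dots,\mathsf w_n)$ is a weighting vector of $f$ for every $\mathsf w_1,\dots,\mathsf w_n\in\mathbb{BC}$ satisfying, for each $\ell=1,\dots,n$, writing $\mathsf w_\ell=w_{\ell_1}\mathbf e_1+w_{\ell_2}\mathbf e_2$: $|w_{\ell_1}|<\delta$ and $|w_{\ell_2}|<\delta$ (equivalently, $\mathsf w_\ell$ has hyperbolic modulus bounded by $\delta\mathbf e_1+\delta\mathbf e_2$).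
   Context: Bicomplex numbers: $\mathbb{BC}=\{z_1+\mathbf j z_2: z_1,z_2\in\mathbb C\}$ where $\mathbb C=\mathbb C(\mathbf i)$, $\mathbf i,\mathbf j$ are commuting units with $\mathbf i^2=\mathbf j^2=-1$. Put $\mathbf e_1=\frac{1+\mathbf i\mathbf j}{2}$, $\mathbf e_2=\frac{1-\mathbf i\mathbf j}{2}$; then $\mathbf e_1^2=\mathbf e_1$, $\mathbf e_2^2=\mathbf e_2$, $\mathbf e_1\mathbf e_2=0$, $\mathbf e_1+\mathbf e_2=1$, and every $Z=z_1+\mathbf jz_2$ is uniquely $Z=\lambda_1\mathbf e_1+\lambda_2\mathbf e_2$ with $\lambda_1=z_1-\mathbf iz_2$, $\lambda_2=z_1+\mathbf iz_2\in\mathbb C$; addition and multiplication are componentwise in this representation. Vectors in $\mathbb{BC}^n$ are likewise written $X_1\mathbf e_1+X_2\mathbf e_2$ with $X_1,X_2\in\mathbb C^n$. Complex activation function: for $z\in\mathbb C\setminus\{0\}$ with argument $\arg z\in[0,2\pi)$, $P(z)=\varepsilon^{l}$ whenever $\frac{2\pi l}{k}\le \arg z<\frac{2\pi(l+1)}{k}$, $l\in\{0,\dots,k-1\}$. Bicomplex activation function: for $\mathsf w_0=w_{0_1}\mathbf e_1+w_{0_2}\mathbf e_2$, $\mathsf w_\ell=w_{\ell_1}\mathbf e_1+w_{\ell_2}\mathbf e_2$, $\mathsf x_\ell=x_{\ell_1}\mathbf e_1+x_{\ell_2}\mathbf e_2$ ($\ell=1,\dots,n$), $\mathcal P(\mathsf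 w_0+\sum_{\ell=1}^n\mathsf w_\ell\mathsf x_\ell):=P(w_{0_1}+\sum_\ell w_{\ell_1}x_{\ell_1})\mathbf e_1+P(w_{0_2}+\sum_\ell w_{\ell_2}x_{\ell_2})\mathbf e_2$. A function $f:T\to\mathbb{BC}$ ($T\subset\mathbb{BC}^n$) is a $\mathbb{BC}$-threshold function if there is a weighting vector $\mathsf W=(\mathsf w_0,\dots,\mathsf w_n)\in\mathbb{BC}^{n+1}$ with $f(\mathsf x_1,\dots,\mathsf x_n)=\mathcal P(\mathsf w_0+\sum_{\ell=1}^n\mathsf w_\ell\mathsf x_\ell)$ for all $(\mathsf x_1,\dots,\mathsf x_n)\in T$. *)

(* Defs.v *)
From mathcomp Require Import all_boot all_order all_algebra.
From mathcomp Require Import complex.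
From mathcomp Require Import all_classical all_reals all_analysis.
Set Implicit Arguments. Unset Strict Implicit. Unset Printing Implicit Defensive.
Import Order.TTheory GRing.Theory Num.Theory.
Local Open Scope ring_scope.
Local Open Scope complex_scope.

Section Bicomplex.
Variable R : realType.
Local Notation C := R[i].

(* A bicomplex number z1 + j z2 is represented by the pair (z1, z2). *)
Definition BC := (C * C)%type.

Definition bc_add (Z W : BC) : BC := (Z.1 + W.1, Z.2 + W.2).
(* (z1 + j z2)(w1 + j w2) = (z1 w1 - z2 w2) + j (z1 w2 + z2 w1), since j^2 = -1 *)
Definition bc_mul (Z W : BC) : BC :=
  (Z.1 * W.1 - Z.2 * W.2, Z.1 * W.2 + Z.2 * W.1).
Definition bc_zero : BC := (0, 0).

(* idempotent components: Z = lambda1 e1 + lambda2 e2 *)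
Definition comp1 (Z : BC) : C := Z.1 - 'i * Z.2.
Definition comp2 (Z : BC) : C := Z.1 + 'i * Z.2.

(* the bicomplex number l1 e1 + l2 e2, with e1 = (1 + ij)/2, e2 = (1 - ij)/2 *)
Definition bc_of_idem (l1 l2 : C) : BC :=
  ((l1 + l2) / 2%:R, 'i * (l1 - l2) / 2%:R).

Definition is_arg (z : C) (theta : R) : Prop :=
  0 <= theta < 2%:R * pi /\ z = `|z| * (cos theta +i* sin theta).

Definition eps (k : nat) : C :=
  cos (2%:R * pi / k%:R) +i* sin (2%:R * pi / k%:R).

(* graph of the complex activation function P of order k (defined for z <> 0) *)
Definition P_rel (k : nat) (z v : C) : Prop :=
  z != 0 /\ exists (theta : R) (l : nat), (l < k)%N /\ is_arg z theta /\
    2%:R * pi * l%:R / k%:R <= theta < 2%:R * pi * (l.+1)%:R / k%:R /\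
    v = eps k ^+ l.

Definition calP_rel (k : nat) (Z V : BC) : Prop :=
  exists p1 p2 : C, P_rel k (comp1 Z) p1 /\ P_rel k (comp2 Z) p2 /\
    V = bc_of_idem p1 p2.

Definition weighted_sum (n : nat) (w0 : BC) (w x : 'I_n -> BC) : BC :=
  bc_add w0 (\big[bc_add/bc_zero]_(l < n) bc_mul (w l) (x l)).

Definition is_weighting_vector (k n : nat) (T : ('I_n -> BC) -> Prop)
    (f : ('I_n -> BC) -> BC) (w0 : BC) (w : 'I_n -> BC) : Prop :=
  forall x, T x -> calP_rel k (weighted_sum w0 w x) (f x).

Definition bc_bounded (n : nat) (T : ('I_n -> BC) -> Prop) : Prop :=
  exists M : R, forall x, T x -> forall l : 'I_n,
    `|comp1 (x l)| <= M%:C /\ `|comp2 (x l)| <= M%:C.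

End Bicomplex.

(* Main.v *)
Require Import Defs.
From mathcomp Require Import all_boot all_order all_algebra.
From mathcomp Require Import complex.
From mathcomp Require Import all_classical all_reals all_analysis.
From mathcomp Require Import ring lra.
Import Order.TTheory GRing.Theory Num.Theory.
Local Open Scope ring_scope.
Local Open Scope complex_scope.
Section S.
Variable R : realType.
Lemma mulRC (r u v : R) : r%:C * (u +i* v) = (r*u) +i* (r*v).
Proof. apply/eqP; rewrite eq_complex /=. rewrite !mul0r subr0 addr0 !eqxx //. Qed.

Lemma arg_unique (z : R[i]) t1 t2 : z != 0 -> is_arg z t1 -> is_arg z t2 -> t1 = t2.
Proof.
rewrite /is_arg => z0 [] /andP[h10 h11] e1 [] /andP[h20 h21] e2.
have nz : `|z| != 0 by rewrite normr_eq0.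
have : (cos t1 +i* sin t1) = (cos t2 +i* sin t2) by apply: (mulfI nz); rewrite -e1 -e2.
case=> c12 s12.
have c1 : cos (t1 - t2) = 1 by rewrite cosB c12 s12 -!expr2 cos2Dsin2.
have key : forall d : R, (0 <= d) && (d < 2%:R * pi) -> cos d = 1 -> d = 0.
  move=> d /andP[d0 d2] cd.
  have cinj := @cos_inj R.
  case: (leP d pi) => hd.
    apply: cinj; rewrite ?in_itv /= ?d0 ?hd ?lexx ?pi_ge0 //.
    by rewrite cd cos0.
  exfalso.
  have h : cos (pi *+ 2 - d) = 1 by rewrite addrC cosD2pi cosN.
  have := cinj (pi *+ 2 - d) 0.
  rewrite !in_itv /= lexx pi_ge0 h cos0.
  have -> : (0 <= pi *+ 2 - d) by rewrite subr_ge0 -mulr_natl ltW.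
  have -> : (pi *+ 2 - d <= pi) by rewrite -mulr_natl; lra.
  move=> /(_ isT isT erefl) /eqP; rewrite subr_eq0 => /eqP hh.
  by move: d2; rewrite mulr_natl -hh ltxx.
case: (leP t2 t1) => h.
  apply/eqP; rewrite -subr_eq0; apply/eqP; apply: key => //.
  by rewrite subr_ge0 h /=; lra.
have : t2 - t1 = 0.
  apply: key; first by rewrite subr_ge0 ltW //=; lra.
  by rewrite -cosN opprB.
by move/eqP; rewrite subr_eq0 => /eqP.
Qed.

Lemma sector_unique (k l l' : nat) (t : R) : (0 < k)%N ->
  2%:R * pi * l%:R / k%:R <= t < 2%:R * pi * (l.+1)%:R / k%:R ->
  2%:R * pi * l'%:R / k%:R <= t < 2%:R * pi * (l'.+1)%:R / k%:R -> l = l'.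
Proof.
move=> k0.
have p : 0 < 2%:R * pi / k%:R :> R by rewrite divr_gt0 ?mulr_gt0 ?pi_gt0 ?ltr0n.
have E : forall m : nat, 2%:R * pi * m%:R / k%:R = (2%:R * pi / k%:R) * m%:R :> R.
  by move=> m; rewrite mulrAC.
have key : forall m m', 2%:R * pi * m%:R / k%:R <= t -> t < 2%:R * pi * (m'.+1)%:R / k%:R -> (m <= m')%N.
  move=> m m' h1 h2.
  have := le_lt_trans h1 h2; rewrite !E ltr_pM2l // ltr_nat ltnS. done.
move=> /andP[a1 a2] /andP[b1 b2].
by apply/eqP; rewrite eqn_leq (key _ _ a1 b2) (key _ _ b1 a2).
Qed.

Lemma P_rel_fun k (z p1 p2 : R[i]) : (0 < k)%N -> P_rel k z p1 -> P_rel k z p2 -> p1 = p2.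
Proof.
move=> k0 [z0 [t1 [l1 [_ [a1 [s1 ->]]]]]] [_ [t2 [l2 [_ [a2 [s2 ->]]]]]].
have et := @arg_unique z t1 t2 z0 a1 a2. subst t2.
by rewrite (@sector_unique k l1 l2 t1 k0 s1 s2).
Qed.
Definition qk (k : nat) : R := pi / k%:R.
Definition sk (k : nat) : R := tan (qk k / 2).
Definition rho (k : nat) : R := sk k / (2 * (1 + sk k)).
Definition tc (k l : nat) : R := (2 * l%:R + 1) * qk k.

Lemma qk_facts k : (2 <= k)%N -> 0 < qk k /\ qk k <= pi / 2 /\ qk k * k%:R = pi.
Proof.
move=> k2.
have kR : 2 <= k%:R :> R by rewrite (ler_nat R 2 k).
have k0 : 0 < k%:R :> R by lra.
split; first by rewrite /qk divr_gt0 // pi_gt0.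
split; last by rewrite /qk divfK // gt_eqF.
rewrite /qk ler_pM2l ?pi_gt0 // lef_pV2 ?posrE //; lra.
Qed.

Lemma sk_facts k : (2 <= k)%N -> 0 < sk k /\ atan (sk k) = qk k / 2.
Proof.
move=> k2; have [q0 [q2 _]] := qk_facts k k2.
have pi0 := @pi_gt0 R.
have h1 : 0 < qk k / 2 < pi / 2 by apply/andP; split; lra.
have h2 : -(pi/2) < qk k / 2 < pi / 2 by apply/andP; split; lra.
split; last by rewrite /sk tanK // in_itv /=.
by rewrite /sk /tan divr_gt0 // ?sin_gt0_pihalf ?cos_gt0_pihalf.
Qed.

Lemma rho_facts k : (2 <= k)%N -> 0 < rho k /\ rho k * (2 + 2 * sk k) = sk k.
Proof.
move=> k2; have [s0 _] := sk_facts k k2.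
split; first by rewrite /rho divr_gt0 // mulr_gt0 //; lra.
rewrite /rho; field; lra.
Qed.

Lemma sq_lt (u v w : R) : 0 < v -> u^+2 + w^+2 < v^+2 -> (- v < u) /\ (u < v).
Proof.
move=> v0 h; have w2 := sqr_ge0 w.
split; rewrite ltNge; apply/negP => hu.
  have h1 : 0 <= - v - u by lra.
  have h2 : 0 <= v - u by lra.
  have := mulr_ge0 h1 h2; nra.
have h1 : 0 <= u - v by lra.
have h2 : 0 <= u + v by lra.
have := mulr_ge0 h1 h2; nra.
Qed.

Lemma sector_ball (k l : nat) (x y : R) : (2 <= k)%N -> (l < k)%N ->
  (x - cos (tc k l))^+2 + (y - sin (tc k l))^+2 < (rho k)^+2 ->
  P_rel k (x +i* y) (eps R k ^+ l).
Proof.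
move=> k2 lk hz.
have [q0 [q2 qpi]] := qk_facts k k2.
have [s0 ats] := sk_facts k k2.
have [r0 hr] := rho_facts k k2.
move: hz; rewrite /tc.
set q := qk k; set s := sk k; set rh := rho k; set L := (l%:R : R); set K := (k%:R : R).
move=> hz.
move: hr r0 s0 ats q0 q2 qpi; rewrite -/q -/s -/rh -/K => hr r0 s0 ats q0 q2 qpi.
set c := cos ((2 * L + 1) * q); set sn := sin ((2 * L + 1) * q).
have cs : c^+2 + sn^+2 = 1 := cos2Dsin2 _.
pose a := c*x + sn*y; pose b := c*y - sn*x.
have ha : a - 1 = c*(x-c) + sn*(y-sn) by rewrite -cs /a; ring.
have hab : (a-1)^+2 + b^+2 < rh^+2.
  have -> : (a-1)^+2 + b^+2 = (c^+2+sn^+2)*((x-c)^+2+(y-sn)^+2) by rewrite ha /b; ring.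
  by rewrite cs mul1r.
have [a1 _] := sq_lt _ _ _ r0 hab.
have [bg bl] : - rh < b /\ b < rh by apply: (sq_lt b rh (a-1) r0); rewrite addrC.
have rl : rh < 1.
  rewrite ltNge; apply/negP => h.
  have h1 : 0 <= rh - 1 by lra.
  have h2 : 0 <= 2 + 2 * s by lra.
  have := mulr_ge0 h1 h2; nra.
have a0 : 0 < a by lra.
have bs1 : b <= s * a by nra.
have bs2 : - s * a <= b by nra.
pose t := b / a.
have t1 : t <= s by rewrite /t ler_pdivrMr.
have t2 : - s <= t by rewrite /t ler_pdivlMr.
pose phi := atan t.
have p1 : phi <= q / 2 by rewrite -ats /phi le_atan.
have p2 : - (q / 2) <= phi by rewrite -ats -atanN /phi le_atan.
pose r := Num.sqrt (x^+2 + y^+2).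
have hr2 : x^+2 + y^+2 = a^+2 + b^+2.
  transitivity ((c^+2 + sn^+2) * (x^+2+y^+2)); first by rewrite cs mul1r.
  by rewrite /a /b; ring.
have rpos : 0 < r by rewrite /r sqrtr_gt0 hr2; nra.
have rr : r^+2 = a^+2 + b^+2 by rewrite /r sqr_sqrtr hr2 //; nra.
have cphi : cos phi = a / r.
  rewrite /phi cos_atan.
  have -> : 1 + t^+2 = (r / a)^+2.
    by rewrite /t !expr_div_n rr; field; rewrite gt_eqF.
  by rewrite sqrtr_sqr ger0_norm ?invf_div // divr_ge0 // ltW.
have sphi : sin phi = b / r.
  have := atanK t; rewrite -/phi /tan cphi => h.
  have -> : sin phi = (sin phi / (a / r)) * (a / r) by rewrite divfK // mulf_neq0 ?invr_eq0 // gt_eqF.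
  by rewrite h /t; field; rewrite !gt_eqF.
pose th := (2 * L + 1) * q + phi.
have K0 : 0 < K by rewrite /K ltr0n; apply: leq_trans k2.
have L0 : 0 <= L by rewrite /L ler0n.
have LK : L + 1 <= K by rewrite /L /K natr1 ler_nat.
have e1 : 2%:R * pi * L / K = 2 * L * q by rewrite -qpi; field; rewrite gt_eqF.
have e2 : 2%:R * pi * (l.+1)%:R / K = 2 * (L + 1) * q.
  by rewrite -natr1 -/L -qpi; field; rewrite gt_eqF.
have hK : 0 <= (K - (L + 1)) * q by rewrite mulr_ge0 ?subr_ge0 // ltW.
have hL : 0 <= L * q by rewrite mulr_ge0 // ltW.
split.
  rewrite eq_complex /= negb_and; apply/orP.
  case: (x =P 0) => [x0|/eqP]; last by left.
  right; apply/eqP => y0; move: a0; rewrite /a x0 y0; lra.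
exists th, l; split => //; split; last split => //.
  split.
    apply/andP; split; rewrite /th; first by nra.
    by rewrite -qpi; nra.
  rewrite normc_def /= -/r mulRC /th cosD sinD -/c -/sn cphi sphi.
  congr (_ +i* _).
    transitivity ((c^+2 + sn^+2) * x); first by rewrite cs mul1r.
    by rewrite /a /b; field; rewrite gt_eqF.
  transitivity ((c^+2 + sn^+2) * y); first by rewrite cs mul1r.
  by rewrite /a /b; field; rewrite gt_eqF.
by rewrite -/L -/K e1 e2 /th; apply/andP; split; nra.
Qed.
Lemma ii : 'i * 'i = -1 :> R[i].
Proof. by rewrite -expr2 sqr_i. Qed.

Lemma comp1_add (Z W : BC R) : comp1 (bc_add Z W) = comp1 Z + comp1 W.
Proof. rewrite /comp1 /bc_add /=; ring. Qed.
Lemma comp2_add (Z W : BC R) : comp2 (bc_add Z W) = comp2 Z + comp2 W.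
Proof. rewrite /comp2 /bc_add /=; ring. Qed.
Lemma comp1_zero : comp1 (bc_zero R) = 0.
Proof. rewrite /comp1 /bc_zero /=; ring. Qed.
Lemma comp2_zero : comp2 (bc_zero R) = 0.
Proof. rewrite /comp2 /bc_zero /=; ring. Qed.
Lemma comp1_mul (Z W : BC R) : comp1 (bc_mul Z W) = comp1 Z * comp1 W.
Proof.
rewrite /comp1 /bc_mul /=.
transitivity ((Z.1 * W.1 - Z.2 * W.2 - 'i * (Z.1 * W.2 + Z.2 * W.1)) + ('i * 'i + 1) * (Z.2 * W.2)).
  by rewrite ii; ring.
ring.
Qed.
Lemma comp2_mul (Z W : BC R) : comp2 (bc_mul Z W) = comp2 Z * comp2 W.
Proof.
rewrite /comp2 /bc_mul /=.
transitivity ((Z.1 * W.1 - Z.2 * W.2 + 'i * (Z.1 * W.2 + Z.2 * W.1)) + ('i * 'i + 1) * (Z.2 * W.2)).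
  by rewrite ii; ring.
ring.
Qed.
Lemma comp1_idem (a b : R[i]) : comp1 (bc_of_idem a b) = a.
Proof.
rewrite /comp1 /bc_of_idem /=.
have h2 : (2%:R : R[i]) != 0 by rewrite pnatr_eq0.
transitivity ((a + b) / 2%:R - ('i * 'i + 1) * (a - b) / 2%:R + (a - b) / 2%:R).
  by field.
by rewrite ii; field.
Qed.
Lemma comp2_idem (a b : R[i]) : comp2 (bc_of_idem a b) = b.
Proof.
rewrite /comp2 /bc_of_idem /=.
have h2 : (2%:R : R[i]) != 0 by rewrite pnatr_eq0.
transitivity ((a + b) / 2%:R + ('i * 'i + 1) * (a - b) / 2%:R - (a - b) / 2%:R).
  by field.
by rewrite ii; field.
Qed.

Lemma comp1_ws n (w0 : BC R) (w x : 'I_n -> BC R) :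
  comp1 (weighted_sum w0 w x) = comp1 w0 + \sum_(l < n) comp1 (w l) * comp1 (x l).
Proof.
rewrite /weighted_sum comp1_add (big_morph _ comp1_add comp1_zero).
by under eq_bigr do rewrite comp1_mul.
Qed.
Lemma comp2_ws n (w0 : BC R) (w x : 'I_n -> BC R) :
  comp2 (weighted_sum w0 w x) = comp2 w0 + \sum_(l < n) comp2 (w l) * comp2 (x l).
Proof.
rewrite /weighted_sum comp2_add (big_morph _ comp2_add comp2_zero).
by under eq_bigr do rewrite comp2_mul.
Qed.

Lemma addCC (a b c d : R) : (a +i* b) + (c +i* d) = (a+c) +i* (b+d).
Proof. by []. Qed.

Definition cc (k l : nat) : R[i] := cos (tc k l) +i* sin (tc k l).

Lemma near_center (k l : nat) (e : R[i]) : (2 <= k)%N -> (l < k)%N ->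
  `|e| < (rho k)%:C -> P_rel k (cc k l + e) (eps R k ^+ l).
Proof.
move=> k2 lk; case: e => e1 e2.
rewrite normc_def /= ltcR => he.
have [r0 _] := rho_facts k k2.
rewrite /cc addCC.
apply: sector_ball => //.
rewrite (addrC (cos _)) (addrC (sin _)) !addrK.
move: he; rewrite -{1}(ger0_norm (ltW r0)) -sqrtr_sqr ltr_sqrt //.
by rewrite exprn_gt0.
Qed.

Lemma sum_bound (n : nat) (u v : 'I_n -> R[i]) (d M' rh : R) : 0 <= M' ->
  (forall l, `|u l| < d%:C) -> (forall l, `|v l| <= M'%:C) -> n%:R * (d * M') < rh ->
  `|\sum_l u l * v l| < rh%:C.
Proof.
move=> M0 hu hv hn.
apply: (le_lt_trans (ler_norm_sum _ _ _)).
apply: (@le_lt_trans _ _ (\sum_(l < n) (d * M')%:C)).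
  apply: ler_sum => l _; rewrite normrM rmorphM /=.
  by apply: ler_pM => //; rewrite ?normr_ge0 // ltW.
by rewrite sumr_const card_ord -rmorphMn /= ltcR -mulr_natl.
Qed.
End S.

Theorem mainTheorem1 (R : realType) (k n : nat)
    (T : ('I_n -> BC R) -> Prop) (f : ('I_n -> BC R) -> BC R) (w0 : BC R) :
  (2 <= k)%N ->
  bc_bounded T ->
  is_weighting_vector k T f w0 (fun _ => bc_zero R) ->
  exists (w0' : BC R) (delta : R), 0 < delta /\
    forall w : 'I_n -> BC R,
      (forall l : 'I_n, `|comp1 (w l)| < delta%:C /\ `|comp2 (w l)| < delta%:C) ->
      is_weighting_vector k T f w0' w.
Proof.
move=> k2 [M hM] hw.
case: (pselect (exists x, T x)) => [[x0 Tx0] | nT]; last first.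
  exists w0, 1; split => // w _ x Tx; exfalso; apply: nT; exists x; exact: Tx.
have k0 : (0 < k)%N by apply: leq_trans k2.
have ws1 : forall x : 'I_n -> BC R, comp1 (weighted_sum w0 (fun _ => bc_zero R) x) = comp1 w0.
  move=> x; rewrite comp1_ws big1 ?addr0 // => l _; by rewrite comp1_zero mul0r.
have ws2 : forall x : 'I_n -> BC R, comp2 (weighted_sum w0 (fun _ => bc_zero R) x) = comp2 w0.
  move=> x; rewrite comp2_ws big1 ?addr0 // => l _; by rewrite comp2_zero mul0r.
have [p1 [p2 [P1 [P2 fx0]]]] := hw x0 Tx0.
rewrite ws1 in P1; rewrite ws2 in P2.
have fx : forall x, T x -> f x = bc_of_idem p1 p2.
  move=> x Tx; have [q1 [q2 [Q1 [Q2 ->]]]] := hw x Tx.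
  rewrite ws1 in Q1; rewrite ws2 in Q2.
  by rewrite (P_rel_fun R k _ _ _ k0 Q1 P1) (P_rel_fun R k _ _ _ k0 Q2 P2).
have := P1; rewrite /P_rel => -[_ [_ [l1 [lk1 [_ [_ e1]]]]]].
have := P2; rewrite /P_rel => -[_ [_ [l2 [lk2 [_ [_ e2]]]]]].
have [r0 _] := rho_facts R k k2.
pose M' := `|M|; pose N := n%:R * M'.
have N0 : 0 <= N by apply: mulr_ge0; [exact: ler0n | exact: normr_ge0].
pose delta := rho R k / (N + 1).
have d0 : 0 < delta by rewrite /delta divr_gt0 //; lra.
have hn : n%:R * (delta * M') < rho R k.
  have -> : n%:R * (delta * M') = rho R k * N / (N + 1).
    have N1 : N + 1 != 0 by rewrite gt_eqF //; lra.
    by rewrite /delta /N; field; move: N1; rewrite /N.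
  rewrite ltr_pdivrMr; last by lra.
  nra.
exists (bc_of_idem (cc R k l1) (cc R k l2)), delta; split => // w hwl x Tx.
rewrite fx //; exists p1, p2; split; last split => //.
  rewrite comp1_ws comp1_idem e1; apply: near_center => //.
  apply: (sum_bound R n _ _ delta M').
  - exact: normr_ge0.
  - by move=> l; case: (hwl l).
  - move=> l; have [h _] := hM x Tx l; apply: (le_trans h); rewrite lecR; exact: ler_norm.
  - exact: hn.
rewrite comp2_ws comp2_idem e2; apply: near_center => //.
apply: (sum_bound R n _ _ delta M').
- exact: normr_ge0.
- by move=> l; case: (hwl l).
- move=> l; have [_ h] := hM x Tx l; apply: (le_trans h); rewrite lecR; exact: ler_norm.
- exact: hn.
Qed.
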